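(* Let $k$ be a nonnegative integer such that some fair set $S \in \mathcal{C}$ has $|S| = k$. Define $\tilde{\mathcal{C}}_k = \{S \subseteq V : \text{there exists } S' \in \mathcal{C} \text{ with } |S'| \le k \text{ and } S \subseteq S'\}$. Then $\tilde{\mathcal{C}}_k$ is a matroid, every fair set $S \in \mathcal{C}$ with $|S| = k$ is a base of $\tilde{\mathcal{C}}_k$, and conversely every base of $\tilde{\mathcal{C}}_k$ is a fair set (of size $k$).
   Context: $V$ is a finite ground set partitioned into disjoint color groups $V_1,\dots,V_C$, with integer bounds $0 \le \ell_c \le u_c$ for each $c$. The fair sets are $\mathcal{C} = \{S \subseteq V : \ell_c \le |S \cap V_c| \le u_c\ \forall c \in [C]\}$. A base of a matroid is an inclusion-maximal independent set. *)

(* Defs.v *)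
From mathcomp Require Import all_boot all_order.
Set Implicit Arguments. Unset Strict Implicit. Unset Printing Implicit Defensive.

(* Ground set V = the finite type T. The partition V_1..V_C is given by a
   colouring col : T -> 'I_C (V_c = [set x | col x == c]). *)

Definition color_group (T : finType) (C : nat) (col : T -> 'I_C) (c : 'I_C)
  : {set T} := [set x | col x == c].

Definition fair (T : finType) (C : nat) (col : T -> 'I_C) (l u : 'I_C -> nat)
  (S : {set T}) : Prop :=
  forall c : 'I_C, l c <= #|S :&: color_group col c| <= u c.

Definition is_matroid (T : finType) (I : {set T} -> Prop) : Prop :=
  [/\ I set0,
      (forall A B : {set T}, B \subset A -> I A -> I B) &
      (forall A B : {set T}, I A -> I B -> #|A| < #|B| ->
          exists2 x, x \in B :\: A & I (x |: A))].

Definition is_base (T : finType) (I : {set T} -> Prop) (B : {set T}) : Prop :=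
  I B /\ (forall A : {set T}, I A -> B \subset A -> A = B).

Definition trunc_fair (T : finType) (C : nat) (col : T -> 'I_C)
  (l u : 'I_C -> nat) (k : nat) (S : {set T}) : Prop :=
  exists S' : {set T}, [/\ fair col l u S', #|S'| <= k & S \subset S'].

(* Main.v *)
Require Import Defs.
From mathcomp Require Import all_boot all_order.
From mathcomp Require Import zify.
From Stdlib Require Import Classical.

Section Helpers.
Variables (T : finType) (C : nat) (col : T -> 'I_C) (l u : 'I_C -> nat).
Local Notation cnt S c := #|S :&: color_group col c|.

Lemma cntD1 (S : {set T}) y c : y \in S -> cnt S c = (col y == c) + cnt (S :\ y) c.
Proof.
move=> yS; rewrite (cardsD1 y) !inE yS /=.
congr (_ + _); apply: eq_card => z; rewrite /color_group !inE; by case: (z == y).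
Qed.

Arguments cntD1 [S y] c.
Lemma cnt_add (S : {set T}) x c : x \notin S -> cnt (x |: S) c = (col x == c) + cnt S c.
Proof. by move=> xS; rewrite (cntD1 c (setU11 x S)) setU1K. Qed.

Lemma card_sum (S : {set T}) : #|S| = \sum_(c < C) cnt S c.
Proof.
rewrite -sum1_card (partition_big col xpredT) //=.
apply: eq_bigr => c _; rewrite -sum1_card; apply: eq_bigl => z; by rewrite !inE.
Qed.

Lemma cnt_mono (A B : {set T}) c : A \subset B -> cnt A c <= cnt B c.
Proof. by move=> sAB; apply: subset_leq_card; apply: setSI. Qed.

Lemma cnt_lt (A B : {set T}) c : cnt A c < cnt B c -> exists2 x, x \in B :\: A & col x == c.
Proof.
move=> lt; have: ~~ (B :&: color_group col c \subset A :&: color_group col c).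
  by apply: contraTN lt => /subset_leq_card; rewrite -leqNgt.
case/subsetPn=> x; rewrite !inE => /andP[xB xc]; rewrite xc andbT => xA.
by exists x => //; rewrite inE xA.
Qed.

Arguments cnt_lt [A B c].
Arguments cnt_mono [A B] c.

Lemma exch k (A B : {set T}) : trunc_fair col l u k A -> trunc_fair col l u k B ->
  #|A| < #|B| -> exists2 x, x \in B :\: A & trunc_fair col l u k (x |: A).
Proof.
move=> [A' [fA' kA' sAA']] [B' [fB' kB' sBB']] ltAB.
apply: NNPP => H.
have H' : forall x, x \in B :\: A -> ~ trunc_fair col l u k (x |: A).
  by move=> x xBA tx; apply: H; exists x.
have [c0 ltc0] : exists c, cnt A c < cnt B c.
  apply: NNPP => nc; move: ltAB; rewrite ltnNge (card_sum A) (card_sum B) => /negP; apply.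
  apply: leq_sum => c _; rewrite leqNgt; apply/negP => h; apply: nc; by exists c.
have [x0 x0BA /eqP cx0] := cnt_lt ltc0.
have F1 : forall x, x \in B :\: A -> x \notin A'.
  move=> x xBA; apply/negP => xA'; apply: (H' x xBA); exists A'; split => //.
  by rewrite subUset sub1set xA' sAA'.
have swap : forall x y, x \in B :\: A -> y \in A' -> y \notin A ->
    (col x = col y \/ l (col y) < cnt A' (col y) /\ cnt A' (col x) < u (col x)) -> False.
  move=> x y xBA yA' yA hc; apply: (H' x xBA); exists (x |: (A' :\ y)).
  have xA'y : x \notin A' :\ y by rewrite inE (negbTE (F1 _ xBA)) andbF.
  split.
  - move=> e; rewrite cnt_add //; have hD := fun e => cntD1 e yA'.
    case: hc => [exy | [hl hu]].
      have := fA' e; rewrite (hD e) -exy; case: (col x == e) => /=; lia.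
    case: (eqVneq (col x) e) => [<-|nxe]; rewrite ?eqxx /=.
      have := fA' (col x); move: hu; rewrite (hD (col x)); case: (col y == col x) => /=; lia.
    have := fA' e; rewrite (hD e); case: (eqVneq (col y) e) => [eye|nye] /=; last lia.
    move: hl; rewrite (hD (col y)) eqxx eye /=; lia.
  - rewrite cardsU1 xA'y; move: kA'; rewrite (cardsD1 y A') yA'; lia.
  - by apply: setUS; rewrite subsetD1 sAA' yA.
have F2 : forall x, x \in B :\: A -> cnt A' (col x) = cnt A (col x).
  move=> x xBA; apply/eqP; rewrite eqn_leq (cnt_mono _ sAA') andbT leqNgt; apply/negP.
  case/cnt_lt => y /setDP[yA' yA] /eqP cy; apply: (swap x y) => //; by left.
have ltu : cnt A' (col x0) < u (col x0).
  rewrite F2 // cx0; apply: (leq_trans ltc0); apply: (leq_trans (cnt_mono c0 sBB')).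
  by case/andP: (fB' c0).
have F3 : #|A'| = k.
  apply/eqP; rewrite eqn_leq kA' leqNgt; apply/negP=> lt.
  apply: (H' x0 x0BA); exists (x0 |: A'); split.
  - move=> e; rewrite cnt_add ?F1 //; have := fA' e; move: ltu.
    by case: (eqVneq (col x0) e) => [<-|_] /=; lia.
  - by rewrite cardsU1 (F1 _ x0BA).
  - exact: setUS.
have F4 : forall y, y \in A' -> y \notin A -> cnt A' (col y) <= l (col y).
  move=> y yA' yA; rewrite leqNgt; apply/negP => h; apply: (swap x0 y) => //; by right.
have key : forall d, cnt A' d + cnt B d <= cnt B' d + cnt A d.
  move=> d; have [eq|neq] := eqVneq (cnt A' d) (cnt A d).
    by rewrite eq addnC leq_add2r cnt_mono.
  have lt : cnt A d < cnt A' d by rewrite ltn_neqAle eq_sym neq cnt_mono.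
  have [y /setDP[yA' yA] /eqP cy] := cnt_lt lt.
  have h1 := F4 y yA' yA; rewrite cy in h1.
  have h2 : cnt B d <= cnt A d.
    rewrite leqNgt; apply/negP => /cnt_lt [x xBA /eqP cx].
    by move: (F2 x xBA); rewrite cx => /eqP; rewrite (negbTE neq).
  have := fB' d; lia.
have : #|A'| + #|B| <= #|B'| + #|A|.
  by rewrite !card_sum -!big_split; apply: leq_sum => d _; apply: key.
lia.
Qed.
End Helpers.

Theorem lemma4p2 (T : finType) (C : nat) (col : T -> 'I_C)
  (l u : 'I_C -> nat) (k : nat) :
  (forall c : 'I_C, l c <= u c) ->
  (exists S : {set T}, fair col l u S /\ #|S| = k) ->
  [/\ is_matroid (trunc_fair col l u k),
      (forall S : {set T}, fair col l u S -> #|S| = k ->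
          is_base (trunc_fair col l u k) S) &
      (forall B : {set T}, is_base (trunc_fair col l u k) B ->
          fair col l u B /\ #|B| = k)].
Proof.
move=> _ [S0 [fS0 kS0]].
have M : is_matroid (trunc_fair col l u k).
  split.
  - by exists S0; split; rewrite ?kS0 ?sub0set.
  - move=> A B sBA [A' [fA' kA' sAA']]; exists A'; split => //; exact: subset_trans sAA'.
  - move=> A B; exact: exch.
split => //.
- move=> S fS kS; split; first by exists S; split; rewrite ?kS.
  move=> A [A' [fA' kA' sAA']] sSA.
  have sSA' : S \subset A' := subset_trans sSA sAA'.
  have eSA' : S = A'.
    apply/eqP; rewrite eqEcard sSA' /=; lia.
  apply/eqP; by rewrite eqEsubset sSA andbT eSA'.
- move=> B [[B' [fB' kB' sBB']] mB].
  have eB : B' = B by apply: mB => //; exists B'; split.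
  subst B'; split => //.
  apply/eqP; rewrite eqn_leq kB' leqNgt; apply/negP => lt.
  case: M => _ _ /(_ B S0) [].
  + by exists B; split.
  + by exists S0; split; rewrite ?kS0.
  + by rewrite kS0.
  move=> x /setDP[_ xB] tx.
  have := mB _ tx (subsetUr _ _) => /setP /(_ x).
  by rewrite !inE eqxx (negbTE xB).
Qed.
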